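(* Let $(\mathscr{C}_1,T_1)$ and $(\mathscr{C}_2,T_2)$ be sites, and let $\mathscr{F}:\mathscr{C}_1\to\mathscr{C}_2$ be a functor that is continuous, cocontinuous, has dense image (with respect to $T_2$), preserves coproducts and inverts coproducts. Suppose $\mathscr{C}_2$ is extensive. Then the functors \[ \mathscr{F}^{*}:\mathrm{Sh}(\mathscr{C}_2,T_2)\rightleftarrows \mathrm{Sh}(\mathscr{C}_1,T_1):\mathscr{F}_{*} \] (restrictions of precomposition $\mathscr{F}^*\mathcal{G}=\mathcal{G}\circ\mathscr{F}$ and of right Kan extension $\mathscr{F}_*$) establish an adjoint equivalence of categories.
   Context: All categories are locally small. A Grothendieck topology $T$ on a category $\mathscr{C}$ assigns to each object $X$ a set $T_X$ of families $(\pi_i:U_i\to X)_{i\in I}$ (''coverings'') such that: (1) for every isomorphism $\phi:U\to X$, $(\phi)\in T_X$; (2) if $(\pi_i:U_i\to X)_{i\in I}\in T_X$ and $(\psi_j)_{j\in J_i}\in T_{U_i}$ for each $i$, then $(\pi_i\circ\psi_j)_{i\in I,j\in J_i}\in T_X$; (3) if $(\pi_i:U_i\to X)\in T_X$ and $f:W\to X$ is any morphism, all pullbacks $f^*\pi_i:f^*U_i\to W$ exist and $(f^*\pi_i)_i\in T_W$. A site is a category with a Grothendieck topology. A morphism is universal if its pullback along every morphism exists. A morphism $\pi:Y\to X$ is $T$-locally split if there is a covering $(\pi_i:U_i\to X)_{i\in I}$ and morphisms $\rho_i:U_i\to Y$ with $\pi\circ\rho_i=\pi_i$. A functor $\mathscr{F}:(\mathscr{C}_1,T_1)\to(\mathscr{C}_2,T_2)$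 is continuous if it sends universal $T_1$-locally split morphisms to universal $T_2$-locally split morphisms and preserves fibre products with universal $T_1$-locally split morphisms. It is cocontinuous if for every object $X$ of $\mathscr{C}_1$ and every universal $T_2$-locally split $\pi:Y\to\mathscr{F}(X)$ there exist a universal $T_1$-locally split $\pi':Y'\to X$ and a morphism $r:\mathscr{F}(Y')\to Y$ with $\pi\circ r=\mathscr{F}(\pi')$. It has dense image (w.r.t. $T_2$) if it is fully faithful and for each object $X$ of $\mathscr{C}_2$ there are objects $U_i$ of $\mathscr{C}_1$ ($i\in I$) and morphisms $\phi_i:\mathscr{F}(U_i)\to X$ such that $\coprod_i\mathscr{F}(U_i)$ exists and the induced morphism $\coprod_i\mathscr{F}(U_i)\to X$ is universal and $T_2$-locally split. It inverts coproducts if it is fully faithful and whenever $\mathscr{F}(X)=\coprod_{i\in I}Z_i$ for an object $X$ of $\mathscr{C}_1$, there exist objects $X_i$ of $\mathscr{C}_1$ and isomorphisms $\mathscr{F}(X_i)\to Z_i$. A category is extensive if it has an initial object $\emptyset$, binary coproducts that exist are disjoint (the square with $\emptyset\to X$, $\emptyset\to Y$, $X\to X\sqcup Y$, $Y\to X\sqcup Y$ is a pullback), and coproducts are stable under pullback: for any existing coproduct $\coprod_i U_i$ and any $f:X\to\coprod_iU_i$, the pullbacks $X\times_{\coprod U_i}U_i$ exist and $X$ is their coproduct via the projections (existence of all coproducts is not required). A presheaf is a functor $\mathscr{C}^{op}\to\mathrm{Set}$; it is extensive if for every existing coproduct $X=\coprod_iX_i$ the canonical map $\mathcal{F}(X)\to\prod_i\mathcal{F}(X_i)$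 is a bijection. It satisfies descent w.r.t. $\pi:Y\to X$ (with $Y\times_XY$ existing) if $\mathcal{F}(X)\to\mathcal{F}(Y)\rightrightarrows\mathcal{F}(Y\times_XY)$ is an equalizer. A $T$-sheaf is an extensive presheaf satisfying descent w.r.t. all universal $T$-locally split morphisms; $\mathrm{Sh}(\mathscr{C},T)$ is the full subcategory of presheaves on these. For $\mathscr{F}:\mathscr{C}_1\to\mathscr{C}_2$, $\mathscr{F}_*$ is the right Kan extension: $(\mathscr{F}_*\mathcal{F})(Y)=\lim \mathscr{P}_Y^*\mathcal{F}$ over the category $\mathscr{F}/Y$ of pairs $(X,\psi:\mathscr{F}(X)\to Y)$, i.e. families $(s_{X,\psi}\in\mathcal{F}(X))$ compatible under morphisms of $\mathscr{F}/Y$; it is right adjoint to $\mathscr{F}^*$ on presheaves. *)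

(* Defs.v *)
Set Implicit Arguments.
Unset Strict Implicit.

(** * Categories (locally small: hom-types, Leibniz equality of morphisms) *)
Record Category := {
  Ob :> Type;
  Hom : Ob -> Ob -> Type;
  cid : forall X, Hom X X;
  comp : forall X Y Z, Hom Y Z -> Hom X Y -> Hom X Z;   (* comp g f = g o f *)
  comp_id_l : forall X Y (f : Hom X Y), comp (cid Y) f = f;
  comp_id_r : forall X Y (f : Hom X Y), comp f (cid X) = f;
  comp_assoc : forall X Y Z W (h : Hom Z W) (g : Hom Y Z) (f : Hom X Y),
      comp h (comp g f) = comp (comp h g) f
}.
Arguments cid {C} X : rename.
Arguments comp {C X Y Z} g f : rename.
Arguments Hom {C} X Y : rename.

Record Functor (C D : Category) := {
  fobj :> Ob C -> Ob D;
  fmap : forall X Y, Hom X Y -> Hom (fobj X) (fobj Y);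
  fmap_id : forall X, fmap (cid X) = cid (fobj X);
  fmap_comp : forall X Y Z (g : Hom Y Z) (f : Hom X Y),
      fmap (comp g f) = comp (fmap g) (fmap f)
}.
Arguments fmap {C D} F {X Y} f : rename.


Definition IsIso {C : Category} (X Y : C) (f : Hom X Y) : Prop :=
  exists g : Hom Y X, comp g f = cid X /\ comp f g = cid Y.

(** [P --p2--> Y ; P --p1--> W] is a pullback of [pi : Y -> X] along [f : W -> X]. *)
Definition IsPullback {C : Category} (W Y X : C) (f : Hom W X) (pi : Hom Y X)
    (P : C) (p1 : Hom P W) (p2 : Hom P Y) : Prop :=
  comp f p1 = comp pi p2 /\
  forall (Q : C) (q1 : Hom Q W) (q2 : Hom Q Y), comp f q1 = comp pi q2 ->
    exists u : Hom Q P, (comp p1 u = q1 /\ comp p2 u = q2) /\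
      forall u' : Hom Q P, comp p1 u' = q1 -> comp p2 u' = q2 -> u' = u.

Definition PullbackExists {C : Category} (W Y X : C) (f : Hom W X) (pi : Hom Y X) : Prop :=
  exists (P : C) (p1 : Hom P W) (p2 : Hom P Y), IsPullback f pi p1 p2.

Definition Universal {C : Category} (Y X : C) (pi : Hom Y X) : Prop :=
  forall (W : C) (f : Hom W X), PullbackExists f pi.

Definition IsCoproduct {C : Category} (I : Type) (Z : I -> C) (S : C)
    (iota : forall i, Hom (Z i) S) : Prop :=
  forall (Q : C) (q : forall i, Hom (Z i) Q),
    exists u : Hom S Q, (forall i, comp u (iota i) = q i) /\
      forall u' : Hom S Q, (forall i, comp u' (iota i) = q i) -> u' = u.

Arguments IsCoproduct {C I} Z {S} iota.

Definition IsInitial {C : Category} (E : C) : Prop :=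
  forall X : C, exists f : Hom E X, forall g : Hom E X, g = f.

Definition Extensive (C : Category) : Prop :=
  (exists E : C, IsInitial E) /\
  (* existing binary coproducts are disjoint *)
  (forall (E : C) (eX : forall X : C, Hom E X), IsInitial E ->
     forall (Z : bool -> C) (S : C) (iota : forall b, Hom (Z b) S),
       IsCoproduct Z iota ->
       IsPullback (iota true) (iota false) (eX (Z true)) (eX (Z false))) /\
  (* coproducts are stable under pullback *)
  (forall (I : Type) (U : I -> C) (S : C) (iota : forall i, Hom (U i) S),
     IsCoproduct U iota ->
     forall (X : C) (f : Hom X S),
       (forall i, PullbackExists f (iota i)) /\
       (forall (P : I -> C) (p1 : forall i, Hom (P i) X)
               (p2 : forall i, Hom (P i) (U i)),
          (forall i, IsPullback f (iota i) (p1 i) (p2 i)) ->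
          IsCoproduct P p1)).

Record Family {C : Category} (X : C) := {
  fam_I : Type;
  fam_U : fam_I -> C;
  fam_pi : forall i, Hom (fam_U i) X
}.

Arguments fam_I {C X} f.
Arguments fam_U {C X} f i.
Arguments fam_pi {C X} f i.

Definition Topology (C : Category) := forall X : C, Family X -> Prop.

Definition singleton_family {C : Category} (U X : C) (phi : Hom U X) : Family X :=
  {| fam_I := unit; fam_U := fun _ => U; fam_pi := fun _ => phi |}.

Definition compose_family {C : Category} (X : C) (F : Family X)
    (G : forall i, Family (fam_U F i)) : Family X :=
  {| fam_I := { i : fam_I F & fam_I (G i) };
     fam_U := fun ij => fam_U (G (projT1 ij)) (projT2 ij);
     fam_pi := fun ij => comp (fam_pi F (projT1 ij)) (fam_pi (G (projT1 ij)) (projT2 ij)) |}.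

Definition IsGrothendieckTopology {C : Category} (T : Topology C) : Prop :=
  (forall (U X : C) (phi : Hom U X), IsIso phi -> T X (singleton_family phi)) /\
  (forall (X : C) (F : Family X) (G : forall i, Family (fam_U F i)),
     T X F -> (forall i, T (fam_U F i) (G i)) -> T X (compose_family G)) /\
  (forall (X : C) (F : Family X), T X F ->
     forall (W : C) (f : Hom W X),
       (forall i, PullbackExists f (fam_pi F i)) /\
       (forall (P : fam_I F -> C) (p1 : forall i, Hom (P i) W)
               (p2 : forall i, Hom (P i) (fam_U F i)),
          (forall i, IsPullback f (fam_pi F i) (p1 i) (p2 i)) ->
          T W {| fam_I := fam_I F; fam_U := P; fam_pi := p1 |})).

Definition LocallySplit {C : Category} (T : Topology C) (Y X : C) (pi : Hom Y X) : Prop :=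
  exists (F : Family X), T X F /\
    exists rho : forall i, Hom (fam_U F i) Y,
      forall i, comp pi (rho i) = fam_pi F i.

Definition UnivLocSplit {C : Category} (T : Topology C) (Y X : C) (pi : Hom Y X) : Prop :=
  Universal pi /\ LocallySplit T pi.

(** * Presheaves of sets (raw data + functoriality as a predicate) *)
Record PreData (C : Category) := {
  pob :> C -> Type;
  pmap : forall X Y : C, Hom X Y -> pob Y -> pob X
}.

Arguments pmap {C} p {X Y} f s.
Arguments pob {C} p X.

Definition IsPresheaf {C : Category} (P : PreData C) : Prop :=
  (forall (X : C) (s : P X), pmap P (cid X) s = s) /\
  (forall (X Y Z : C) (g : Hom Y Z) (f : Hom X Y) (s : P Z),
      pmap P (comp g f) s = pmap P f (pmap P g s)).

Definition ExtensivePresheaf {C : Category} (P : PreData C) : Prop :=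
  forall (I : Type) (Z : I -> C) (S : C) (iota : forall i, Hom (Z i) S),
    IsCoproduct Z iota ->
    (forall s s' : P S, (forall i, pmap P (iota i) s = pmap P (iota i) s') -> s = s') /\
    (forall t : forall i, P (Z i), exists s : P S, forall i, pmap P (iota i) s = t i).

(** Descent w.r.t. [pi : Y -> X]: for (any choice of) the fibre product
    [Y x_X Y], [P X -> P Y => P (Y x_X Y)] is an equalizer. *)
Definition Descent {C : Category} (P : PreData C) (Y X : C) (pi : Hom Y X) : Prop :=
  forall (K : C) (p1 p2 : Hom K Y), IsPullback pi pi p1 p2 ->
    (forall s s' : P X, pmap P pi s = pmap P pi s' -> s = s') /\
    (forall t : P Y, pmap P p1 t = pmap P p2 t -> exists s : P X, pmap P pi s = t).

Definition IsSheaf {C : Category} (T : Topology C) (P : PreData C) : Prop :=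
  IsPresheaf P /\ ExtensivePresheaf P /\
  forall (Y X : C) (pi : Hom Y X), UnivLocSplit T pi -> Descent P pi.



Section FunctorProps.
Variables (C1 C2 : Category) (F : Functor C1 C2).

Definition FullyFaithful : Prop :=
  forall X Y : C1,
    (forall f g : Hom X Y, fmap F f = fmap F g -> f = g) /\
    (forall h : Hom (F X) (F Y), exists f : Hom X Y, fmap F f = h).

Definition Continuous (T1 : Topology C1) (T2 : Topology C2) : Prop :=
  (forall (Y X : C1) (pi : Hom Y X), UnivLocSplit T1 pi -> UnivLocSplit T2 (fmap F pi)) /\
  (forall (W Y X : C1) (f : Hom W X) (pi : Hom Y X), UnivLocSplit T1 pi ->
     forall (P : C1) (p1 : Hom P W) (p2 : Hom P Y), IsPullback f pi p1 p2 ->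
       IsPullback (fmap F f) (fmap F pi) (fmap F p1) (fmap F p2)).

Definition Cocontinuous (T1 : Topology C1) (T2 : Topology C2) : Prop :=
  forall (X : C1) (Y : C2) (pi : Hom Y (F X)), UnivLocSplit T2 pi ->
    exists (Y' : C1) (pi' : Hom Y' X), UnivLocSplit T1 pi' /\
      exists r : Hom (F Y') Y, comp pi r = fmap F pi'.

Definition DenseImage (T2 : Topology C2) : Prop :=
  FullyFaithful /\
  forall X : C2, exists (I : Type) (U : I -> C1) (phi : forall i, Hom (F (U i)) X)
    (S : C2) (iota : forall i, Hom (F (U i)) S),
    IsCoproduct (fun i => F (U i)) iota /\
    exists h : Hom S X, (forall i, comp h (iota i) = phi i) /\ UnivLocSplit T2 h.

Definition PreservesCoproducts : Prop :=
  forall (I : Type) (Z : I -> C1) (S : C1) (iota : forall i, Hom (Z i) S),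
    IsCoproduct Z iota -> IsCoproduct (fun i => F (Z i)) (fun i => fmap F (iota i)).

Definition InvertsCoproducts : Prop :=
  FullyFaithful /\
  forall (X : C1) (I : Type) (Z : I -> C2) (iota : forall i, Hom (Z i) (F X)),
    IsCoproduct Z iota ->
    exists Xi : I -> C1, forall i, exists u : Hom (F (Xi i)) (Z i), IsIso u.

Definition pullbackPre (G : PreData C2) : PreData C1 :=
  {| pob := fun X => G (F X);
     pmap := fun X Y f s => pmap G (fmap F f) s |}.

(** Compatible families over the comma category F/Y. *)
Definition Compatible (H : PreData C1) (Y : C2)
    (s : forall X : C1, Hom (F X) Y -> H X) : Prop :=
  forall (X X' : C1) (h : Hom X' X) (psi : Hom (F X) Y),
    pmap H h (s X psi) = s X' (comp psi (fmap F h)).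

Definition pushOb (H : PreData C1) (Y : C2) : Type :=
  { s : forall X : C1, Hom (F X) Y -> H X | @Compatible H Y s }.

Lemma pushMap_compat (H : PreData C1) (Y Y' : C2) (g : Hom Y' Y)
    (s : pushOb H Y) :
  @Compatible H Y' (fun X (psi : Hom (F X) Y') => proj1_sig s X (comp g psi)).
Proof.
  intros X X' h psi. rewrite (proj2_sig s). rewrite comp_assoc. reflexivity.
Qed.

Definition pushforwardPre (H : PreData C1) : PreData C2 :=
  {| pob := pushOb H;
     pmap := fun Y' Y g s =>
       exist _ (fun X psi => proj1_sig s X (comp g psi)) (pushMap_compat g s) |}.

(** Unit [G Y -> (F_* F^* G) Y], [s |-> (G psi s)_(X,psi)], is bijective. *)
Definition UnitBijective (G : PreData C2) (Y : C2) : Prop :=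
  forall t : pushforwardPre (pullbackPre G) Y,
    exists s : G Y, (forall X psi, pmap G psi s = proj1_sig t X psi) /\
      forall s' : G Y, (forall X psi, pmap G psi s' = proj1_sig t X psi) -> s' = s.

Definition counit (H : PreData C1) (X : C1) :
    pullbackPre (pushforwardPre H) X -> H X :=
  fun s => proj1_sig s X (cid (F X)).

Definition CounitBijective (H : PreData C1) (X : C1) : Prop :=
  (forall s s', @counit H X s = @counit H X s' -> s = s') /\
  (forall t : H X, exists s, @counit H X s = t).

(** The adjunction F^* -| F_* restricts to an adjoint equivalence
    Sh(C2,T2) <-> Sh(C1,T1): both functors preserve sheaves, and unit and
    counit are isomorphisms on sheaves. *)
Definition ShAdjointEquivalence (T1 : Topology C1) (T2 : Topology C2) : Prop :=
  (forall G : PreData C2, IsSheaf T2 G -> IsSheaf T1 (pullbackPre G)) /\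
  (forall H : PreData C1, IsSheaf T1 H -> IsSheaf T2 (pushforwardPre H)) /\
  (forall G : PreData C2, IsSheaf T2 G -> forall Y : C2, UnitBijective G Y) /\
  (forall H : PreData C1, IsSheaf T1 H -> forall X : C1, CounitBijective H X).

End FunctorProps.

(* Main.v *)
Require Import Defs.
From Stdlib Require Import FunctionalExtensionality ProofIrrelevance ClassicalEpsilon Classical.
Set Implicit Arguments.
Unset Strict Implicit.

Lemma dchoice {I : Type} {A : I -> Type} (R : forall i, A i -> Prop) :
  (forall i, exists x, R i x) -> exists f : forall i, A i, forall i, R i (f i).
Proof.
  intro H. exists (fun i => proj1_sig (constructive_indefinite_description _ (H i))).
  intro i. exact (proj2_sig (constructive_indefinite_description _ (H i))).
Qed.

Lemma pb_family {C : Category} {I : Type} (W X : C) (Y : I -> C) (f : Hom W X)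
  (pi : forall i, Hom (Y i) X) :
  (forall i, PullbackExists f (pi i)) ->
  exists (P : I -> C) (p1 : forall i, Hom (P i) W) (p2 : forall i, Hom (P i) (Y i)),
    forall i, IsPullback f (pi i) (p1 i) (p2 i).
Proof.
  intro H.
  assert (H' : forall i, exists x : {P : C & (Hom P W * Hom P (Y i))%type},
     IsPullback f (pi i) (fst (projT2 x)) (snd (projT2 x))).
  { intro i. destruct (H i) as (P & p1 & p2 & Hp). exists (existT _ P (p1, p2)). exact Hp. }
  destruct (dchoice H') as [g Hg].
  exists (fun i => projT1 (g i)), (fun i => fst (projT2 (g i))), (fun i => snd (projT2 (g i))).
  exact Hg.
Qed.

Lemma coprod_iso {C : Category} {I : Type} (Z Z' : I -> C) (S : C)
  (iota : forall i, Hom (Z i) S) (u : forall i, Hom (Z' i) (Z i)) :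
  IsCoproduct Z iota -> (forall i, IsIso (u i)) ->
  IsCoproduct Z' (fun i => comp (iota i) (u i)).
Proof.
  intros Hc Hu.
  destruct (dchoice (A := fun i => Hom (Z i) (Z' i)) (R :=
    (fun i v => comp v (u i) = cid _ /\ comp (u i) v = cid _)) Hu) as [v Hv].
  intros Q q.
  destruct (Hc Q (fun i => comp (q i) (v i))) as [w [Hw1 Hw2]].
  exists w. split.
  - intro i. rewrite comp_assoc, Hw1, <- comp_assoc, (proj1 (Hv i)), comp_id_r. reflexivity.
  - intros w' Hw'. apply Hw2. intro i. rewrite <- (Hw' i).
    rewrite <- !comp_assoc, (proj2 (Hv i)), comp_id_r. reflexivity.
Qed.

Lemma coprod_reflect {C1 C2 : Category} (F : Functor C1 C2) {I : Type}
  (Z : I -> C1) (S : C1) (j : forall i, Hom (Z i) S) :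
  FullyFaithful F ->
  IsCoproduct (fun i => F (Z i)) (fun i => fmap F (j i)) -> IsCoproduct Z j.
Proof.
  intros FF Hc Q q.
  destruct (Hc (F Q) (fun i => fmap F (q i))) as [w [Hw1 Hw2]].
  destruct (proj2 (FF S Q) w) as [w0 Hw0]. subst w.
  exists w0. split.
  - intro i. apply (proj1 (FF _ _)). rewrite fmap_comp. apply Hw1.
  - intros w' Hw'. apply (proj1 (FF _ _)). apply Hw2. intro i.
    rewrite <- fmap_comp, Hw'. reflexivity.
Qed.

Lemma coprod_unique_map {C : Category} {I : Type} (Z : I -> C) (S : C)
  (iota : forall i, Hom (Z i) S) (Q : C) (a b : Hom S Q) :
  IsCoproduct Z iota -> (forall i, comp a (iota i) = comp b (iota i)) -> a = b.
Proof.
  intros Hc H. destruct (Hc Q (fun i => comp b (iota i))) as [w [_ Hw]].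
  rewrite (Hw a H), (Hw b (fun i => eq_refl)). reflexivity.
Qed.

Lemma pb_paste {C : Category} (W X Y V : C) (f : Hom W X) (pi : Hom Y X)
  (P : C) (p1 : Hom P W) (p2 : Hom P Y) (g : Hom V W)
  (Q : C) (q1 : Hom Q V) (q2 : Hom Q Y) :
  IsPullback f pi p1 p2 -> IsPullback (comp f g) pi q1 q2 ->
  exists m : Hom Q P, IsPullback g p1 q1 m /\ comp p2 m = q2.
Proof.
  intros [HP1 HP2] [HQ1 HQ2].
  destruct (HP2 Q (comp g q1) q2) as [m [[Hm1 Hm2] _]].
  { rewrite comp_assoc. exact HQ1. }
  exists m. split; [split|exact Hm2].
  - symmetry. exact Hm1.
  - intros R r1 r2 Hr.
    destruct (HQ2 R r1 (comp p2 r2)) as [u [[Hu1 Hu2] Hu3]].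
    { rewrite <- comp_assoc, Hr, !comp_assoc, HP1. reflexivity. }
    exists u. split; [split|].
    + exact Hu1.
    + destruct (HP2 R (comp p1 r2) (comp p2 r2)) as [z [_ Hz]].
      { rewrite !comp_assoc, HP1. reflexivity. }
      rewrite (Hz r2 eq_refl eq_refl). apply Hz.
      * rewrite comp_assoc, Hm1, <- comp_assoc, Hu1. exact Hr.
      * rewrite comp_assoc, Hm2. exact Hu2.
    + intros u' H1 H2. apply Hu3. exact H1.
      rewrite <- H2, comp_assoc, Hm2. reflexivity.
Qed.

Lemma uls_pullback {C : Category} (T : Topology C) (HT : IsGrothendieckTopology T)
  (W X Y : C) (f : Hom W X) (pi : Hom Y X) (P : C) (p1 : Hom P W) (p2 : Hom P Y) :
  UnivLocSplit T pi -> IsPullback f pi p1 p2 -> UnivLocSplit T p1.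
Proof.
  intros [Hu Hl] Hpb. split.
  - intros V g. destruct (Hu V (comp f g)) as (Q & q1 & q2 & HQ).
    destruct (pb_paste Hpb HQ) as [m [Hm _]].
    exists Q, q1, m. exact Hm.
  - destruct Hl as [Fm [HF [rho Hrho]]].
    destruct HT as [_ [_ H3]].
    destruct (H3 X Fm HF W f) as [Hex Hcov].
    destruct (pb_family Hex) as (Pi & a & b & Hab).
    exists {| fam_I := fam_I Fm; fam_U := Pi; fam_pi := a |}.
    split. { exact (Hcov Pi a b Hab). }
    simpl.
    assert (Hs : forall i, exists s : Hom (Pi i) P, comp p1 s = a i).
    { intro i. destruct (proj2 Hpb (Pi i) (a i) (comp (rho i) (b i))) as [s [[Hs1 _] _]].
      { rewrite (proj1 (Hab i)), comp_assoc, Hrho. reflexivity. }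
      exists s. exact Hs1. }
    destruct (dchoice Hs) as [s Hs']. exists s. exact Hs'.
Qed.

Lemma uls_id {C : Category} (T : Topology C) (HT : IsGrothendieckTopology T) (X : C) :
  UnivLocSplit T (cid X).
Proof.
  split.
  - intros W f. exists W, (cid W), f. split.
    + rewrite comp_id_l, comp_id_r. reflexivity.
    + intros Q q1 q2 Hq. exists q1. split; [split|].
      * apply comp_id_l.
      * rewrite comp_id_l in Hq. exact Hq.
      * intros u' H1 _. rewrite comp_id_l in H1. exact H1.
  - exists (singleton_family (cid X)). split.
    + apply (proj1 HT). exists (cid X). split; apply comp_id_l.
    + exists (fun _ => cid X). intro i. simpl. apply comp_id_l.
Qed.

Lemma uls_descent_pb {C : Category} (T : Topology C) (P : PreData C)
  (Y X : C) (pi : Hom Y X) :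
  UnivLocSplit T pi -> (forall (Y X : C) (pi : Hom Y X), UnivLocSplit T pi -> Descent P pi) ->
  exists (K : C) (k1 k2 : Hom K Y), IsPullback pi pi k1 k2 /\
    (forall s s' : P X, pmap P pi s = pmap P pi s' -> s = s') /\
    (forall t : P Y, pmap P k1 t = pmap P k2 t -> exists s : P X, pmap P pi s = t).
Proof.
  intros Hu HD. destruct (proj1 Hu Y pi) as (K & k1 & k2 & HK).
  exists K, k1, k2. split. exact HK. exact (HD _ _ _ Hu K k1 k2 HK).
Qed.

Lemma ext_hom_subsingleton {C : Category} (Hext : Extensive C) {I : Type}
  (Z : I -> C) (S : C) (iota : forall i, Hom (Z i) S) (Hc : IsCoproduct Z iota)
  (j l : I) (A : C) (al : Hom A (Z j)) (be : Hom A (Z l)) :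
  j <> l -> comp (iota j) al = comp (iota l) be ->
  forall (Q : C) (u u' : Hom A Q), u = u'.
Proof.
  intros Hjl Heq Q u u'.
  destruct Hext as [_ [_ Hst]].
  destruct (Hst I Z S iota Hc A (comp (iota j) al)) as [Hex Hcop].
  destruct (pb_family Hex) as (P & e & c & Hpb).
  specialize (Hcop P e c Hpb).
  destruct (proj2 (Hpb j) A (cid A) al) as [sj [[Hsj _] _]].
  { apply comp_id_r. }
  destruct (proj2 (Hpb l) A (cid A) be) as [sl [[Hsl _] _]].
  { rewrite comp_id_r. exact Heq. }
  destruct (Hcop Q (fun m => if excluded_middle_informative (m = l)
                              then comp u' (e m) else comp u (e m))) as [W [HW _]].
  assert (E1 : u = W).
  { rewrite <- (comp_id_r u), <- Hsj, comp_assoc.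
    rewrite <- (comp_id_r W), <- Hsj, (comp_assoc W).
    f_equal. rewrite (HW j).
    destruct (excluded_middle_informative (j = l)); [contradiction|reflexivity]. }
  assert (E2 : u' = W).
  { rewrite <- (comp_id_r u'), <- Hsl, comp_assoc.
    rewrite <- (comp_id_r W), <- Hsl, (comp_assoc W).
    f_equal. rewrite (HW l).
    destruct (excluded_middle_informative (l = l)); [reflexivity|contradiction]. }
  congruence.
Qed.

Lemma ext_inj_mono {C : Category} (Hext : Extensive C) {I : Type}
  (Z : I -> C) (S : C) (iota : forall i, Hom (Z i) S) (Hc : IsCoproduct Z iota)
  (j : I) (A : C) (al be : Hom A (Z j)) :
  comp (iota j) al = comp (iota j) be -> al = be.
Proof.
  intros Heq.
  destruct Hext as [_ [_ Hst]].
  destruct (Hst I Z S iota Hc (Z j) (iota j)) as [Hex Hcop].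
  destruct (pb_family Hex) as (P & e & c & Hpb).
  specialize (Hcop P e c Hpb).
  destruct (proj2 (Hpb j) (Z j) (cid _) (cid _)) as [d [[Hd1 Hd2] _]].
  { reflexivity. }
  set (w := fun m => match excluded_middle_informative (m = j) with
                     | left p => match p in _ = y return Hom (P m) (Z y) with
                                 | eq_refl => c m end
                     | right _ => e m end).
  destruct (Hcop (Z j) w) as [r [Hr _]].
  assert (Hrj : comp r (e j) = c j).
  { rewrite (Hr j). unfold w.
    destruct (excluded_middle_informative (j = j)) as [p|n]; [|contradiction].
    rewrite (proof_irrelevance _ p eq_refl). reflexivity. }
  assert (Hr1 : r = cid _).
  { transitivity (comp r (comp (e j) d)). { rewrite Hd1, comp_id_r; reflexivity. } rewrite comp_assoc, Hrj; exact Hd2. }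
  destruct (proj2 (Hpb j) A al be) as [m [[Hm1 Hm2] _]].
  { exact Heq. }
  rewrite <- Hm1, <- Hm2, <- Hrj, Hr1, comp_id_l. reflexivity.
Qed.

Lemma pushOb_ext {C1 C2 : Category} (F : Functor C1 C2) (H : PreData C1) (Y : C2)
  (s s' : pushOb F H Y) :
  (forall X psi, proj1_sig s X psi = proj1_sig s' X psi) -> s = s'.
Proof.
  destruct s as [s Hs], s' as [s' Hs']. simpl. intro E.
  assert (s = s').
  { apply functional_extensionality_dep. intro X. apply functional_extensionality. apply E. }
  subst s'. f_equal. apply proof_irrelevance.
Qed.

Lemma sheaf_subsingleton {C1 C2 : Category} (F : Functor C1 C2) (T : Topology C1)
  (H : PreData C1) (HH : IsSheaf T H) (FF : FullyFaithful F) (V : C1) :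
  (forall (Q : C2) (u u' : Hom (F V) Q), u = u') -> forall a b : H V, a = b.
Proof.
  intros Hs a b.
  destruct HH as [[Hid _] [Hex _]].
  assert (Hc : IsCoproduct (fun _ : bool => V) (fun _ => cid V)).
  { intros Q q. exists (q true). split.
    - intro i. rewrite comp_id_r. apply (proj1 (FF _ _)). apply Hs.
    - intros u' Hu'. rewrite <- (Hu' true), comp_id_r. reflexivity. }
  destruct (proj2 (Hex bool _ V _ Hc) (fun i => if i then a else b)) as [s Hs'].
  pose proof (Hs' true) as E1. pose proof (Hs' false) as E2. simpl in E1, E2.
  rewrite Hid in E1, E2. congruence.
Qed.

Section Decomp.
Variables (C1 C2 : Category) (F : Functor C1 C2).
Hypothesis FF : FullyFaithful F.
Hypothesis Hinv : InvertsCoproducts F.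
Hypothesis HE : Extensive C2.

Lemma decomp {I : Type} (Z : I -> C2) (S : C2) (iota : forall i, Hom (Z i) S)
  (Hc : IsCoproduct Z iota) (W : C1) (psi : Hom (F W) S) :
  exists (Wl : I -> C1) (jl : forall i, Hom (Wl i) W) (phi : forall i, Hom (F (Wl i)) (Z i)),
    IsCoproduct Wl jl /\ IsCoproduct (fun i => F (Wl i)) (fun i => fmap F (jl i)) /\
    forall i, comp psi (fmap F (jl i)) = comp (iota i) (phi i).
Proof.
  destruct HE as [_ [_ Hst]].
  destruct (Hst I Z S iota Hc (F W) psi) as [Hex Hcop].
  destruct (pb_family Hex) as (P & p1 & p2 & Hpb).
  specialize (Hcop P p1 p2 Hpb).
  destruct (proj2 Hinv W I P p1 Hcop) as [Xi HXi].
  destruct (dchoice HXi) as [u Hu].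
  pose proof (coprod_iso Hcop Hu) as Hc2.
  assert (Hj : forall i, exists j : Hom (Xi i) W, fmap F j = comp (p1 i) (u i)).
  { intro i. exact (proj2 (FF _ _) _). }
  destruct (dchoice Hj) as [j Hj'].
  assert (Ej : (fun i => fmap F (j i)) = (fun i => comp (p1 i) (u i))).
  { apply functional_extensionality_dep. exact Hj'. }
  exists Xi, j, (fun i => comp (p2 i) (u i)).
  assert (Hc3 : IsCoproduct (fun i => F (Xi i)) (fun i => fmap F (j i))).
  { rewrite Ej. exact Hc2. }
  split; [|split].
  - exact (coprod_reflect FF Hc3).
  - exact Hc3.
  - intro i. rewrite Hj', !comp_assoc, (proj1 (Hpb i)). reflexivity.
Qed.

End Decomp.

Section PushExt.
Variables (C1 C2 : Category) (F : Functor C1 C2) (T1 : Topology C1).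
Hypothesis FF : FullyFaithful F.
Hypothesis Hinv : InvertsCoproducts F.
Hypothesis HE : Extensive C2.
Variable H : PreData C1.
Hypothesis HH : IsSheaf T1 H.

Lemma push_extensive : ExtensivePresheaf (pushforwardPre F H).
Proof.
  pose proof HH as [[Hid Hcmp] [HexH _]].
  intros I Z S iota Hc. split.
  - intros s s' Hi. apply pushOb_ext. intros W psi.
    destruct (decomp FF Hinv HE Hc psi) as (Wl & jl & phi & HcW & _ & Hphi).
    apply (proj1 (HexH I Wl W jl HcW)). intro i. simpl.
    rewrite (proj2_sig s), (proj2_sig s'), (Hphi i).
    pose proof (f_equal (fun z : pushOb F H (Z i) => proj1_sig z (Wl i) (phi i)) (Hi i)) as E. simpl in E.
    exact E.
  - intro t.
    assert (KEY : forall V i l (a : Hom (F V) (Z i)) (b : Hom (F V) (Z l)),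
               comp (iota i) a = comp (iota l) b -> proj1_sig (t i) V a = proj1_sig (t l) V b).
    { intros V i l a b Hab. destruct (classic (i = l)) as [E|E].
      - subst l. rewrite (ext_inj_mono HE Hc Hab). reflexivity.
      - apply (sheaf_subsingleton HH FF). intros Q u u'.
        exact (ext_hom_subsingleton HE Hc E Hab u u'). }
    set (Good := fun W (psi : Hom (F W) S) (x : H W) =>
      forall V (g : Hom V W) i (phi : Hom (F V) (Z i)),
        comp psi (fmap F g) = comp (iota i) phi -> pmap H g x = proj1_sig (t i) V phi).
    assert (Gex : forall W psi, exists x, Good W psi x).
    { intros W psi.
      destruct (decomp FF Hinv HE Hc psi) as (Wl & jl & phi & HcW & HcFW & Hphi).
      destruct (proj2 (HexH I Wl W jl HcW) (fun i => proj1_sig (t i) (Wl i) (phi i))) as [x Hx].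
      exists x. intros V g i phi' Heq.
      destruct (decomp FF Hinv HE HcFW (fmap F g)) as (Vl & ml & ga & HcV & _ & Hga).
      assert (Hg : forall l, exists gl : Hom (Vl l) (Wl l), fmap F gl = ga l).
      { intro l. exact (proj2 (FF _ _) _). }
      destruct (dchoice Hg) as [gl Hgl].
      apply (proj1 (HexH I Vl V ml HcV)). intro l.
      assert (Eg : comp g (ml l) = comp (jl l) (gl l)).
      { apply (proj1 (FF _ _)). rewrite !fmap_comp, Hga, Hgl. reflexivity. }
      rewrite <- Hcmp, Eg, Hcmp, Hx, (proj2_sig (t l)), (proj2_sig (t i)).
      apply KEY.
      rewrite !comp_assoc, <- Hphi, <- Heq, <- !comp_assoc, <- !fmap_comp, Eg.
      reflexivity. }
    assert (Guniq : forall W psi x y, Good W psi x -> Good W psi y -> x = y).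
    { intros W psi x y Gx Gy.
      destruct (decomp FF Hinv HE Hc psi) as (Wl & jl & phi & HcW & _ & Hphi).
      apply (proj1 (HexH I Wl W jl HcW)). intro i.
      rewrite (Gx _ _ _ _ (Hphi i)), (Gy _ _ _ _ (Hphi i)). reflexivity. }
    set (s := fun W psi => proj1_sig (constructive_indefinite_description _ (Gex W psi))).
    assert (Hs : forall W psi, Good W psi (s W psi)).
    { intros W psi. exact (proj2_sig (constructive_indefinite_description _ (Gex W psi))). }
    assert (Hcomp : @Compatible _ _ F H S s).
    { intros W W' h psi. apply (Guniq W' (comp psi (fmap F h))); [|apply Hs].
      intros V g i phi Heq. rewrite <- Hcmp. apply (Hs W psi).
      rewrite fmap_comp, comp_assoc. exact Heq. }
    exists (exist _ s Hcomp). intro i. apply pushOb_ext. intros V phi. simpl.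
    rewrite <- (Hid V (s V (comp (iota i) phi))).
    apply (Hs V). rewrite fmap_id, comp_id_r. reflexivity.
Qed.

End PushExt.

Section PushDesc.
Variables (C1 C2 : Category) (F : Functor C1 C2) (T1 : Topology C1) (T2 : Topology C2).
Hypothesis HT1 : IsGrothendieckTopology T1.
Hypothesis HT2 : IsGrothendieckTopology T2.
Hypothesis Hcoc : Cocontinuous F T1 T2.
Variable H : PreData C1.
Hypothesis HH : IsSheaf T1 H.

Lemma push_descent (Y X : C2) (pi : Hom Y X) :
  UnivLocSplit T2 pi -> Descent (pushforwardPre F H) pi.
Proof.
  intros Hpi K k1 k2 HK.
  pose proof HH as [[Hid Hcmp] [_ HD]].
  assert (DataEx : forall W (psi : Hom (F W) X), exists W' (p' : Hom W' W) (psi' : Hom (F W') Y),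
             UnivLocSplit T1 p' /\ comp pi psi' = comp psi (fmap F p')).
  { intros W psi. destruct (proj1 Hpi (F W) psi) as (P & a & b & Hpb).
    pose proof (uls_pullback HT2 Hpi Hpb) as Ha.
    destruct (Hcoc Ha) as (W' & p' & Hp' & r & Hr).
    exists W', p', (comp b r). split; [exact Hp'|].
    rewrite comp_assoc, <- (proj1 Hpb), <- comp_assoc, Hr. reflexivity. }
  split.
  - intros s s' E. apply pushOb_ext. intros W psi.
    destruct (DataEx W psi) as (W1 & p1 & psi1 & Hp1 & Heq1).
    destruct (uls_descent_pb Hp1 HD) as (K1 & _ & _ & _ & Hinj & _).
    apply Hinj. rewrite (proj2_sig s), (proj2_sig s'), <- Heq1.
    pose proof (f_equal (fun z : pushOb F H Y => proj1_sig z W1 psi1) E) as E'.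
    simpl in E'. exact E'.
  - intros t Ht.
    assert (GLUE : forall V (a b : Hom (F V) Y), comp pi a = comp pi b ->
                     proj1_sig t V a = proj1_sig t V b).
    { intros V a b Hab. destruct (proj2 HK (F V) a b Hab) as [m [[Hm1 Hm2] _]].
      pose proof (f_equal (fun z : pushOb F H K => proj1_sig z V m) Ht) as E.
      simpl in E. rewrite Hm1, Hm2 in E. exact E. }
    set (Good := fun W (psi : Hom (F W) X) (x : H W) =>
      forall W' (p' : Hom W' W) (psi' : Hom (F W') Y), UnivLocSplit T1 p' ->
        comp pi psi' = comp psi (fmap F p') -> pmap H p' x = proj1_sig t W' psi').
    assert (ONE : forall W psi x W1 (p1 : Hom W1 W) psi1, UnivLocSplit T1 p1 ->
              comp pi psi1 = comp psi (fmap F p1) -> pmap H p1 x = proj1_sig t W1 psi1 ->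
              Good W psi x).
    { intros W psi x W1 p1 psi1 Hp1 Heq1 Hx1 W2 p2 psi2 Hp2 Heq2.
      destruct (proj1 Hp1 W2 p2) as (W12 & q2 & q1 & Hpb).
      pose proof (uls_pullback HT1 Hp1 Hpb) as Hq2.
      destruct (uls_descent_pb Hq2 HD) as (K2 & _ & _ & _ & Hinj & _).
      apply Hinj.
      rewrite <- Hcmp, (proj1 Hpb), Hcmp, Hx1, (proj2_sig t), (proj2_sig t).
      apply GLUE.
      rewrite !comp_assoc, Heq1, Heq2, <- !comp_assoc, <- !fmap_comp, (proj1 Hpb).
      reflexivity. }
    assert (Gex : forall W psi, exists x, Good W psi x).
    { intros W psi. destruct (DataEx W psi) as (W1 & p1 & psi1 & Hp1 & Heq1).
      destruct (uls_descent_pb Hp1 HD) as (K1 & l1 & l2 & HK1 & _ & Hsurj).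
      destruct (Hsurj (proj1_sig t W1 psi1)) as [x Hx].
      { rewrite (proj2_sig t), (proj2_sig t). apply GLUE.
        rewrite !comp_assoc, Heq1, <- !comp_assoc, <- !fmap_comp, (proj1 HK1). reflexivity. }
      exists x. exact (ONE _ _ _ _ _ _ Hp1 Heq1 Hx). }
    assert (Guniq : forall W psi x y, Good W psi x -> Good W psi y -> x = y).
    { intros W psi x y Gx Gy. destruct (DataEx W psi) as (W1 & p1 & psi1 & Hp1 & Heq1).
      destruct (uls_descent_pb Hp1 HD) as (K1 & _ & _ & _ & Hinj & _).
      apply Hinj. rewrite (Gx _ _ _ Hp1 Heq1), (Gy _ _ _ Hp1 Heq1). reflexivity. }
    set (s := fun W psi => proj1_sig (constructive_indefinite_description _ (Gex W psi))).
    assert (Hs : forall W psi, Good W psi (s W psi)).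
    { intros W psi. exact (proj2_sig (constructive_indefinite_description _ (Gex W psi))). }
    assert (Hcomp : @Compatible _ _ F H X s).
    { intros W W0 h psi. apply (Guniq W0 (comp psi (fmap F h))); [|apply Hs].
      destruct (DataEx W psi) as (W1 & p1 & psi1 & Hp1 & Heq1).
      destruct (proj1 Hp1 W0 h) as (W01 & q & q' & Hpb).
      pose proof (uls_pullback HT1 Hp1 Hpb) as Hq.
      apply (ONE _ _ _ _ _ (comp psi1 (fmap F q')) Hq).
      - rewrite comp_assoc, Heq1, <- !comp_assoc, <- !fmap_comp, (proj1 Hpb). reflexivity.
      - rewrite <- Hcmp, (proj1 Hpb), Hcmp, (Hs W psi _ _ _ Hp1 Heq1), (proj2_sig t).
        reflexivity. }
    exists (exist _ s Hcomp). apply pushOb_ext. intros V phi. simpl.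
    rewrite <- (Hid V (s V (comp pi phi))).
    apply (Hs V (comp pi phi) V (cid V) phi (uls_id HT1 V)).
    rewrite fmap_id, comp_id_r. reflexivity.
Qed.

End PushDesc.

Lemma push_presheaf {C1 C2 : Category} (F : Functor C1 C2) (H : PreData C1) :
  IsPresheaf (pushforwardPre F H).
Proof.
  split.
  - intros X s. apply pushOb_ext. intros W psi. simpl. rewrite comp_id_l. reflexivity.
  - intros X Y Z g f s. apply pushOb_ext. intros W psi. simpl. rewrite comp_assoc. reflexivity.
Qed.

Lemma pull_sheaf {C1 C2 : Category} (F : Functor C1 C2) (T1 : Topology C1) (T2 : Topology C2)
  (Hcont : Continuous F T1 T2) (Hpres : PreservesCoproducts F)
  (G : PreData C2) (HG : IsSheaf T2 G) : IsSheaf T1 (pullbackPre F G).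
Proof.
  destruct HG as [[Hid Hcmp] [HexG HDG]].
  split; [split|split].
  - intros X s. simpl. rewrite fmap_id. apply Hid.
  - intros X Y Z g f s. simpl. rewrite fmap_comp. apply Hcmp.
  - intros I Z S iota Hc. exact (HexG _ _ _ _ (Hpres _ _ _ _ Hc)).
  - intros Y X pi Hpi K k1 k2 HK.
    exact (HDG _ _ _ (proj1 Hcont _ _ _ Hpi) _ _ _ (proj2 Hcont _ _ _ _ _ Hpi _ _ _ HK)).
Qed.

Lemma counit_bij {C1 C2 : Category} (F : Functor C1 C2) (T1 : Topology C1)
  (FF : FullyFaithful F) (H : PreData C1) (HH : IsSheaf T1 H) (X : C1) :
  CounitBijective F H X.
Proof.
  destruct HH as [[Hid Hcmp] _].
  split.
  - intros s s' E. unfold counit in E. apply pushOb_ext. intros W psi.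
    destruct (proj2 (FF W X) psi) as [g Hg]. subst psi.
    rewrite <- (comp_id_l (fmap F g)).
    rewrite <- (proj2_sig s), <- (proj2_sig s'), E. reflexivity.
  - intro t.
    set (ch := fun W (psi : Hom (F W) (F X)) =>
                 proj1_sig (constructive_indefinite_description _ (proj2 (FF W X) psi))).
    assert (Hch : forall W psi, fmap F (ch W psi) = psi).
    { intros W psi. exact (proj2_sig (constructive_indefinite_description _ (proj2 (FF W X) psi))). }
    set (s := fun W psi => pmap H (ch W psi) t).
    assert (Hs : @Compatible _ _ F H (F X) s).
    { intros W W' h psi. unfold s. rewrite <- Hcmp. f_equal.
      apply (proj1 (FF _ _)). rewrite Hch, fmap_comp, Hch. reflexivity. }
    exists (exist _ s Hs). unfold counit. simpl. unfold s.
    assert (E : ch X (cid (F X)) = cid X).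
    { apply (proj1 (FF _ _)). rewrite Hch, fmap_id. reflexivity. }
    rewrite E. apply Hid.
Qed.

Section Unit.
Variables (C1 C2 : Category) (F : Functor C1 C2) (T2 : Topology C2).
Hypothesis HT2 : IsGrothendieckTopology T2.
Hypothesis Hdense : DenseImage F T2.
Hypothesis Hinv : InvertsCoproducts F.
Hypothesis HE : Extensive C2.
Variable G : PreData C2.
Hypothesis HG : IsSheaf T2 G.

Lemma unit_bij (Y : C2) : UnitBijective F G Y.
Proof.
  pose proof HG as [[Hid Hcmp] [HexG HDG]].
  pose proof (proj1 Hdense) as FF.
  assert (SEP : forall Z (x y : G Z), (forall V (c : Hom (F V) Z), pmap G c x = pmap G c y) -> x = y).
  { intros Z x y Hxy.
    destruct (proj2 Hdense Z) as (I & U & phi & S & iota & HcS & h & Hh & Hhuls).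
    destruct (uls_descent_pb Hhuls HDG) as (K & _ & _ & _ & Hinj & _).
    apply Hinj. apply (proj1 (HexG I _ S iota HcS)). intro i.
    rewrite <- !Hcmp, Hh. apply Hxy. }
  intro t. set (tt := proj1_sig t).
  assert (Htt : forall X X' (h : Hom X' X) (psi : Hom (F X) Y),
             pmap G (fmap F h) (tt X psi) = tt X' (comp psi (fmap F h))).
  { intros. exact (proj2_sig t X X' h psi). }
  destruct (proj2 Hdense Y) as (I & U & phi & S & iota & HcS & h & Hh & Hhuls).
  assert (STAR : forall u : G S, (forall i, pmap G (iota i) u = tt (U i) (phi i)) ->
                   forall V (e : Hom (F V) S), pmap G e u = tt V (comp h e)).
  { intros u Hu V e.
    destruct (decomp FF Hinv HE HcS e) as (Vl & jl & ph & HcV & HcFV & Hph).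
    apply (proj1 (HexG I _ _ _ HcFV)). intro l.
    rewrite <- Hcmp, (Hph l), Hcmp, Hu, Htt.
    destruct (proj2 (FF _ _) (ph l)) as [gl Hgl]. rewrite <- Hgl, Htt.
    f_equal. rewrite <- comp_assoc, (Hph l), Hgl, comp_assoc, Hh. reflexivity. }
  destruct (proj2 (HexG I _ S iota HcS) (fun i => tt (U i) (phi i))) as [u Hu].
  destruct (uls_descent_pb Hhuls HDG) as (K & k1 & k2 & HK & Hinj & Hsurj).
  destruct (Hsurj u) as [s Hs].
  { apply SEP. intros V c. rewrite <- !Hcmp, !(STAR u Hu).
    rewrite !comp_assoc, (proj1 HK). reflexivity. }
  exists s. split.
  - intros X psi. fold tt.
    destruct (proj1 Hhuls (F X) psi) as (Q & a & b & Hpb).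
    pose proof (uls_pullback HT2 Hhuls Hpb) as Ha.
    destruct (uls_descent_pb Ha HDG) as (K2 & _ & _ & _ & Hinj2 & _).
    apply Hinj2. rewrite <- Hcmp, (proj1 Hpb), Hcmp, Hs.
    apply SEP. intros V c. rewrite <- !Hcmp, (STAR u Hu).
    destruct (proj2 (FF _ _) (comp a c)) as [g Hg]. rewrite <- Hg, Htt, Hg.
    rewrite !comp_assoc, (proj1 Hpb). reflexivity.
  - intros s' Hs'. apply Hinj. rewrite Hs.
    apply (proj1 (HexG I _ S iota HcS)). intro i.
    rewrite Hu, <- Hcmp, Hh. apply Hs'.
Qed.

End Unit.

Theorem mainTheorem1 (C1 C2 : Category) (T1 : Topology C1) (T2 : Topology C2)
    (F : Functor C1 C2) :
  IsGrothendieckTopology T1 -> IsGrothendieckTopology T2 ->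
  Continuous F T1 T2 -> Cocontinuous F T1 T2 -> DenseImage F T2 ->
  PreservesCoproducts F -> InvertsCoproducts F ->
  Extensive C2 ->
  ShAdjointEquivalence F T1 T2.
Proof.
  intros HT1 HT2 Hcont Hcoc Hdense Hpres Hinv HE.
  pose proof (proj1 Hdense) as FF.
  split; [|split; [|split]].
  - intros G HG. exact (pull_sheaf Hcont Hpres HG).
  - intros H HH. split; [|split].
    + apply push_presheaf.
    + exact (push_extensive FF Hinv HE HH).
    + intros Y X pi Hpi. exact (push_descent HT1 HT2 Hcoc HH Hpi).
  - intros G HG Y. exact (@unit_bij _ _ _ _ HT2 Hdense Hinv HE _ HG Y).
  - intros H HH X. exact (counit_bij FF HH X).
Qed.
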